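(* Let $n\ge2$, let $\mathbf{x}=(x_1,\dots,x_n)^T\in\mathbb{C}^n$ with $x_i\neq x_j$ for all $i\neq j$, let $F$, $p$ and $F''$ be as in the context, and put \[ W_l=\frac{p(x_l)}{\prod_{j=1,\,j\neq l}^n(x_l-x_j)},\qquad l=1,\dots,n,\qquad \mathbf{d}=F'(\mathbf{x})^{-1}F(\mathbf{x}). \] Then $\mathbf{d}=(W_1,\dots,W_n)^T$ and, for $j=1,\dots,n$, \[ \Big(F'(\mathbf{x})^{-1}\,F''(\mathbf{x})(\mathbf{d},\mathbf{d})\Big)_j=2\,W_j\sum_{\nu=1,\,\nu\neq j}^n\frac{W_\nu}{x_\nu-x_j}. \]
   Context: Let $p(t)=t^n+a_{n-1}t^{n-1}+\dots+a_1t+a_0$ be a monic polynomial of degree $n$ with real coefficients, and set $\mathbf{a}=(a_0,a_1,\dots,a_{n-1})^T$. Define $V=(v_1,\dots,v_n)^T:\mathbb{C}^n\to\mathbb{C}^n$ by \[ v_{n-\nu+1}(\mathbf{x})=\sum_{i_1<i_2<\dots<i_\nu}(-x_{i_1})(-x_{i_2})\cdots(-x_{i_\nu}),\qquad \nu=1,\dots,n, \] (the sum running over all $\nu$-element index sets $\{i_1<\dots<i_\nu\}\subseteq\{1,\dots,n\}$), so that $\prod_{j=1}^n(t-x_j)=t^n+\sum_{j=0}^{n-1}v_{j+1}(\mathbf{x})t^j$. Define $F=(f_1,\dots,f_n)^T:\mathbb{C}^n\to\mathbb{C}^n$ by $F(\mathbf{x})=V(\mathbf{x})-\mathbf{a}$,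 with Jacobian $F'(\mathbf{x})$. For $k=1,\dots,n$, $A^{(k)}(\mathbf{x})\in\mathbb{C}^{n\times n}$ is the matrix whose $(i,l)$ entry is $\partial^2 f_i(\mathbf{x})/\partial x_l\partial x_k$, and the second derivative is the bilinear map $F''(\mathbf{x})(\mathbf{y},\mathbf{z})=\sum_{k=1}^n z_k\,A^{(k)}(\mathbf{x})\,\mathbf{y}$ for $\mathbf{y},\mathbf{z}\in\mathbb{C}^n$, i.e. $F''(\mathbf{x})(\mathbf{y},\mathbf{z})_i=\sum_{k,l}\frac{\partial^2 f_i(\mathbf{x})}{\partial x_l\partial x_k}y_l z_k$. *)

(* Defs.v *)
From HB Require Import structures.
From mathcomp Require Import all_boot all_order all_algebra.
From mathcomp Require Import mpoly.
From mathcomp Require Import complex.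
Set Implicit Arguments. Unset Strict Implicit. Unset Printing Implicit Defensive.
Import Order.TTheory GRing.Theory Num.Theory.
Local Open Scope ring_scope.

Section Defs.
Variables (R : rcfType) (n : nat).
Local Notation C := (complex R).

Definition realC (r : R) : C := Complex r 0.

(* p(t) = t^n + sum_{j<n} a_j t^j, evaluated at a complex point;
   a j is the coefficient a_j (0-based index j = 0..n-1). *)
Definition p_eval (a : 'I_n -> R) (t : C) : C :=
  t ^+ n + \sum_(j < n) realC (a j) * t ^+ j.

(* Component i (0-based, i.e. v_{i+1}) of V as a polynomial in x_1..x_n:
   v_{n-nu+1} = sum over nu-subsets of prod (-x_k), with nu = n - i. *)
Definition Vpoly (i : 'I_n) : {mpoly C[n]} :=
  \sum_(A : {set 'I_n} | #|A| == (n - i)%N) \prod_(k in A) (- 'X_k).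

Definition Fpoly (a : 'I_n -> R) (i : 'I_n) : {mpoly C[n]} :=
  Vpoly i - (realC (a i))%:MP.

Definition Fval (a : 'I_n -> R) (x : 'cV[C]_n) : 'cV[C]_n :=
  \col_i (Fpoly a i).@[fun k => x k 0].

Definition Fjac (a : 'I_n -> R) (x : 'cV[C]_n) : 'M[C]_n :=
  \matrix_(i, l) (mderiv l (Fpoly a i)).@[fun k => x k 0].

Definition Amat (a : 'I_n -> R) (x : 'cV[C]_n) (k : 'I_n) : 'M[C]_n :=
  \matrix_(i, l) (mderiv l (mderiv k (Fpoly a i))).@[fun k' => x k' 0].

Definition F2 (a : 'I_n -> R) (x y z : 'cV[C]_n) : 'cV[C]_n :=
  \sum_(k < n) z k 0 *: (Amat a x k *m y).

Definition Wcoef (a : 'I_n -> R) (x : 'cV[C]_n) (l : 'I_n) : C :=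
  p_eval a (x l 0) / \prod_(j < n | j != l) (x l 0 - x j 0).

End Defs.

(* Main.v *)
Require Import Defs.
From HB Require Import structures.
From mathcomp Require Import all_boot all_order all_algebra.
From mathcomp Require Import mpoly.
From mathcomp Require Import complex.
From mathcomp Require Import zify ring.
Import Order.TTheory GRing.Theory Num.Theory.
Local Open Scope ring_scope.
Set Implicit Arguments. Unset Strict Implicit. Unset Printing Implicit Defensive.

Section S.
Variables (R : rcfType) (n : nat).
Local Notation C := (complex R).

Definition Qm : {poly {mpoly C[n]}} := \prod_(j < n) ('X - ('X_j)%:P).

Lemma Vpoly_coef (i : 'I_n) : Vpoly R i = Qm`_i.
Proof.
pose cs := [tuple ('X_j : {mpoly C[n]}) | j < n].
have ki : (n - i < n.+1)%N by rewrite ltnS leq_subr.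
have := mroots_coeff cs (Ordinal ki).
rewrite /= subKn; last exact: ltnW.
have -> : \prod_(c <- cs) ('X - c%:P) = Qm.
  by rewrite /cs /Qm /= big_map big_enum.
move=> ->.
rewrite /mesym raddf_sum /= mulr_sumr /Vpoly; apply: eq_bigr => A /eqP hA.
rewrite rmorph_prod /= prodrN hA; congr (_ * _); apply: eq_bigr => j _.
by rewrite mevalXU tnth_mktuple.
Qed.

Definition Dm (l : 'I_n) (P : {poly {mpoly C[n]}}) := map_poly (mderiv l) P.

Lemma Dm_coef l P i : (Dm l P)`_i = mderiv l P`_i.
Proof. by rewrite /Dm coef_map_id0 // mderiv0. Qed.

Lemma DmM l P Q : Dm l (P * Q) = Dm l P * Q + P * Dm l Q.
Proof.
apply/polyP => i; rewrite coefD Dm_coef !coefM raddf_sum /= -big_split /=.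
apply: eq_bigr => j _; by rewrite mderivM !Dm_coef.
Qed.

Lemma Dm1 l : Dm l 1 = 0.
Proof. by rewrite -polyC1 /Dm map_polyC /= -mpolyC1 mderivC. Qed.
Lemma DmX l : Dm l 'X = 0.
Proof.
apply/polyP => i; rewrite Dm_coef coefX coef0.
by case: (i == 1)%N; [rewrite mulr1n -mpolyC1 mderivC | exact: mderiv0].
Qed.
Lemma DmC l c : Dm l c%:P = (mderiv l c)%:P.
Proof. by rewrite /Dm map_polyC. Qed.
Lemma DmB l P Q : Dm l (P - Q) = Dm l P - Dm l Q.
Proof. by rewrite /Dm raddfB. Qed.

Lemma mderivXU (l j : 'I_n) : mderiv l ('X_j : {mpoly C[n]}) = (j == l)%:R.
Proof.
rewrite mderivX mnm1E; case: (j =P l) => [->|_]; last by rewrite scale0r.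
have -> : (U_(l) - U_(l))%MM = 0%MM.
  by apply/mnmP => k; rewrite mnmBE mnm0E subnn.
by rewrite mpolyX0 scale1r.
Qed.

Lemma Dm_XsubC l (j : 'I_n) : Dm l ('X - ('X_j)%:P) = - ((j == l)%:R)%:P.
Proof. by rewrite DmB DmX DmC mderivXU sub0r. Qed.

Local Notation fX j := ('X - (('X_j : {mpoly C[n]}))%:P).

Lemma Dm_prod0 l (P : pred 'I_n) : ~~ P l -> Dm l (\prod_(j | P j) fX j) = 0.
Proof.
move=> nPl; apply: (big_ind (fun q => Dm l q = 0)).
- exact: Dm1.
- by move=> q1 q2 h1 h2; rewrite DmM h1 h2 mul0r mulr0 addr0.
- move=> j Pj; rewrite Dm_XsubC; case: (j =P l) => [ejl|]; last by rewrite oppr0.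
  by move: Pj; rewrite ejl (negbTE nPl).
Qed.

Lemma Dm_prod1 l (P : pred 'I_n) : P l ->
  Dm l (\prod_(j | P j) fX j) = - \prod_(j | P j && (j != l)) fX j.
Proof.
move=> Pl; rewrite (bigD1 l) //= DmM Dm_prod0; last by rewrite eqxx andbF.
by rewrite Dm_XsubC eqxx mulr0 addr0 mulNr mul1r.
Qed.

Lemma mderiv_V l (i : 'I_n) :
  mderiv l (Vpoly R i) = - (\prod_(j | j != l) fX j)`_i.
Proof.
by rewrite Vpoly_coef -Dm_coef /Qm Dm_prod1 // coefN.
Qed.

Lemma mderiv2_V k l (i : 'I_n) :
  mderiv l (mderiv k (Vpoly R i)) =
  if l == k then 0 else (\prod_(j | (j != k) && (j != l)) fX j)`_i.
Proof.
rewrite mderiv_V mderivN -Dm_coef.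
case: (l =P k) => [->|/eqP nlk].
  by rewrite Dm_prod0 ?eqxx // coef0 oppr0.
by rewrite Dm_prod1 // coefN opprK.
Qed.

Lemma eval_coef (v : 'I_n -> C) (P : {poly {mpoly C[n]}}) i :
  (P`_i).@[v] = (map_poly (meval v) P)`_i.
Proof. by rewrite coef_map_id0 // meval0. Qed.

Lemma eval_prod (v : 'I_n -> C) (P : pred 'I_n) :
  map_poly (meval v) (\prod_(j | P j) fX j) = \prod_(j | P j) ('X - (v j)%:P).
Proof.
rewrite rmorph_prod; apply: eq_bigr => j _.
by rewrite rmorphB /= map_polyX map_polyC /= mevalXU.
Qed.

Lemma sz_sum (I : finType) (P : pred I) (F : I -> {poly C}) k :
  (forall i, P i -> (size (F i) <= k)%N) -> (size (\sum_(i | P i) F i)%R <= k)%N.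
Proof.
move=> h; apply: (big_ind (fun q : {poly C} => size q <= k)%N) => //.
- by rewrite size_poly0.
- by move=> q1 q2 h1 h2; apply: leq_trans (size_polyD _ _) _; rewrite geq_max h1 h2.
Qed.

Lemma sz_prodX (P : pred 'I_n) (c : 'I_n -> C) :
  size (\prod_(j | P j) ('X - (c j)%:P)) = #|P|.+1.
Proof.
rewrite size_prod; last by move=> j _; rewrite polyXsubC_eq0.
under eq_bigr do rewrite size_XsubC.
rewrite sum_nat_const; set k := #|P|.
lia.
Qed.

Lemma card_lt (P : pred 'I_n) l : ~~ P l -> (#|P| < n)%N.
Proof.
move=> nPl; rewrite -[X in (_ < X)%N](card_ord n) -(cardC P).
rewrite -[X in (X < _)%N]addn0 ltn_add2l; apply/card_gt0P; exists l.
by rewrite inE.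
Qed.

Lemma roots_eq (z : 'I_n -> C) (A B : {poly C}) :
  injective z -> (size A <= n)%N -> (size B <= n)%N ->
  (forall m, A.[z m] = B.[z m]) -> A = B.
Proof.
move=> iz sA sB hAB; apply/eqP; rewrite -subr_eq0; apply/eqP.
apply: (@roots_geq_poly_eq0 _ _ [seq z m | m <- enum 'I_n]).
- by apply/allP => t /mapP [m _ ->]; rewrite /root hornerD hornerN hAB subrr.
- by rewrite map_inj_uniq // enum_uniq.
- rewrite size_map size_enum_ord; apply: leq_trans (size_polyD _ _) _.
  by rewrite geq_max size_polyN sA sB.
Qed.


Section T.
Variables (a : 'I_n -> R) (x : 'cV[C]_n).
Hypothesis hx : forall i j : 'I_n, i != j -> x i 0 != x j 0.

Definition zz (k : 'I_n) : C := x k 0.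
Definition Q1 l : {poly C} := \prod_(j < n | j != l) ('X - (x j 0)%:P).
Definition Q2 k l : {poly C} := \prod_(j < n | (j != k) && (j != l)) ('X - (x j 0)%:P).
Definition qz : {poly C} := \prod_(j < n) ('X - (x j 0)%:P).
Definition pp : {poly C} := 'X^n + \sum_(j < n) (realC (a j))%:P * 'X^j.

Lemma zz_inj : injective zz.
Proof. by move=> i j; apply: contra_eq => /hx. Qed.

Lemma Fjac_E i l : Fjac a x i l = - (Q1 l)`_i.
Proof.
rewrite mxE /Fpoly mderivB mderivC subr0 mderiv_V mevalN eval_coef.
by rewrite (eval_prod (fun k => x k 0)).
Qed.

Lemma Amat_E k i l : Amat a x k i l = if l == k then 0 else (Q2 k l)`_i.
Proof.
rewrite mxE /Fpoly mderivB mderivC subr0 mderiv2_V.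
case: (l == k); first by rewrite meval0.
by rewrite eval_coef (eval_prod (fun k => x k 0)).
Qed.

Lemma Fval_E i : Fval a x i 0 = qz`_i - realC (a i).
Proof.
rewrite mxE /Fpoly mevalB mevalC Vpoly_coef eval_coef /Qm.
by rewrite (eval_prod (fun k => x k 0) xpredT).
Qed.

Lemma mulJ (y : 'cV[C]_n) i :
  (Fjac a x *m y) i 0 = (- \sum_l y l 0 *: Q1 l)`_i.
Proof.
rewrite mxE coefN coef_sum -sumrN; apply: eq_bigr => l _.
by rewrite Fjac_E coefZ mulNr mulrC.
Qed.


Lemma Q1_eval l m : (Q1 l).[x m 0] =
  if l == m then \prod_(j < n | j != m) (x m 0 - x j 0) else 0.
Proof.
rewrite /Q1 horner_prod; under eq_bigr do rewrite hornerXsubC.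
case: eqP => [->//|/eqP nlm].
by rewrite (bigD1 m) /= 1?eq_sym // subrr mul0r.
Qed.

Lemma Q2_eval k l m : (Q2 k l).[x m 0] =
  if (m == k) || (m == l) then \prod_(j < n | (j != k) && (j != l)) (x m 0 - x j 0)
  else 0.
Proof.
rewrite /Q2 horner_prod; under eq_bigr do rewrite hornerXsubC.
case: ifP => // /norP [mk ml].
by rewrite (bigD1 m) /= ?mk ?ml // subrr mul0r.
Qed.

Lemma Pm_neq0 m : \prod_(j < n | j != m) (x m 0 - x j 0) != 0.
Proof. by apply/prodf_neq0 => j jm; rewrite subr_eq0 hx // eq_sym. Qed.

Lemma qz_eval m : qz.[x m 0] = 0.
Proof.
rewrite /qz horner_prod (bigD1 m) //= hornerXsubC subrr mul0r //.
Qed.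

Lemma pp_eval t : pp.[t] = p_eval a t.
Proof.
rewrite /pp /p_eval hornerD hornerXn horner_sum; congr (_ + _).
by apply: eq_bigr => j _; rewrite hornerCM hornerXn.
Qed.

Lemma size_Q1 l : (size (Q1 l) <= n)%N.
Proof. by rewrite /Q1 sz_prodX; apply: (@card_lt _ l); rewrite /= eqxx. Qed.

Lemma size_Q2 k l : (size (Q2 k l) <= n)%N.
Proof. by rewrite /Q2 sz_prodX; apply: (@card_lt _ k); rewrite /= eqxx. Qed.

Lemma size_qz : size qz = n.+1.
Proof. by by rewrite /qz (sz_prodX xpredT) card_ord. Qed.

Lemma pp_coef_hi j : (n <= j)%N -> pp`_j = (j == n)%:R.
Proof.
move=> hj; rewrite /pp coefD coefXn coef_sum big1 ?addr0 // => k _.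
rewrite coefCM coefXn; case: eqP => [ejk|]; last by rewrite mulr0.
by move: (ltn_ord k); rewrite -ejk ltnNge hj.
Qed.

Lemma qz_coef_hi j : (n <= j)%N -> qz`_j = (j == n)%:R.
Proof.
move=> hj; case: eqP => [->|/eqP njn].
  have := monic_prod_XsubC (index_enum 'I_n) xpredT (fun j => x j 0).
  by move/monicP; rewrite lead_coefE size_qz.
by apply: nth_default; rewrite size_qz ltn_neqAle eq_sym njn.
Qed.

Lemma size_qzpp : (size (qz - pp)%R <= n)%N.
Proof.
apply/leq_sizeP => j hj; rewrite coefB pp_coef_hi // qz_coef_hi // subrr //.
Qed.

Lemma pp_coef (i : 'I_n) : pp`_i = realC (a i).
Proof.
rewrite /pp coefD coefXn ltn_eqF // add0r coef_sum.
rewrite (bigD1 i) //= coefCM coefXn eqxx mulr1 big1 ?addr0 // => k nki.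
rewrite coefCM coefXn; case: eqP => [eik|]; last by rewrite mulr0.
by move: nki; rewrite (_ : k = i) ?eqxx //; apply: val_inj.
Qed.


Lemma size_sumQ1 (c : 'I_n -> C) : (size (- \sum_l c l *: Q1 l) <= n)%N.
Proof.
rewrite size_polyN; apply: sz_sum => l _.
exact: leq_trans (size_scale_leq _ _) (size_Q1 l).
Qed.

Lemma eval_sumQ1 (c : 'I_n -> C) m :
  (- \sum_l c l *: Q1 l).[x m 0] = - (c m * \prod_(j < n | j != m) (x m 0 - x j 0)).
Proof.
rewrite hornerN horner_sum (bigD1 m) //= big1 ?addr0.
  by rewrite hornerZ Q1_eval eqxx.
by move=> l /negbTE nlm; rewrite hornerZ Q1_eval nlm mulr0.
Qed.

Lemma part1 : Fjac a x *m (\col_l Wcoef a x l) = Fval a x.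
Proof.
have H : - \sum_l (\col_l Wcoef a x l) l 0 *: Q1 l = qz - pp.
  apply: (roots_eq zz_inj); [exact: size_sumQ1 | exact: size_qzpp|].
  move=> m; rewrite /zz eval_sumQ1 hornerD hornerN qz_eval pp_eval sub0r.
  by rewrite mxE /Wcoef divfK // Pm_neq0.
apply/matrixP => i j; rewrite (ord1 j) mulJ H Fval_E coefB pp_coef //.
Qed.

Lemma unitJ : Fjac a x \in unitmx.
Proof.
rewrite -unitmx_tr -row_free_unit; apply: inj_row_free => v hv.
have hy : Fjac a x *m v^T = 0 by rewrite -[Fjac a x]trmxK -trmx_mul hv trmx0.
have G0 : - \sum_l v^T l 0 *: Q1 l = 0.
  apply/polyP => i; rewrite coef0.
  case: (ltnP i n) => [lin|nli].
    by have := congr1 (fun M : 'cV[C]_n => M (Ordinal lin) 0) hy; rewrite mulJ mxE.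
  by apply: nth_default; apply: leq_trans nli; apply: size_sumQ1.
apply/rowP => m; rewrite mxE.
have := congr1 (horner^~ (x m 0)) G0.
rewrite eval_sumQ1 horner0 => /eqP; rewrite oppr_eq0 mulf_eq0 (negbTE (Pm_neq0 m)) orbF.
by rewrite mxE => /eqP.
Qed.


Definition WW : 'cV[C]_n := \col_l Wcoef a x l.
Definition YY : 'cV[C]_n := \col_j (2 * Wcoef a x j *
          \sum_(nu < n | nu != j) Wcoef a x nu / (x nu 0 - x j 0)).
Definition GG : {poly C} :=
  \sum_k \sum_(l < n | l != k) (Wcoef a x k * Wcoef a x l) *: Q2 k l.

Lemma F2_E i : F2 a x WW WW i 0 = GG`_i.
Proof.
rewrite /F2 summxE /GG coef_sum; apply: eq_bigr => k _.
rewrite !mxE coef_sum mulr_sumr (bigD1 k) //= Amat_E eqxx mul0r mulr0 add0r.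
apply: eq_bigr => l /negbTE nlk; rewrite Amat_E nlk coefZ !mxE; ring.
Qed.

Lemma GG_eval m : GG.[x m 0] = 2 * Wcoef a x m *
  \sum_(l < n | l != m) Wcoef a x l * \prod_(j < n | (j != m) && (j != l)) (x m 0 - x j 0).
Proof.
rewrite /GG horner_sum (bigD1 m) //=.
have E1 : (\sum_(l < n | l != m) (Wcoef a x m * Wcoef a x l) *: Q2 m l).[x m 0] =
   \sum_(l < n | l != m) Wcoef a x m * Wcoef a x l *
      \prod_(j < n | (j != m) && (j != l)) (x m 0 - x j 0).
  by rewrite horner_sum; apply: eq_bigr => l _; rewrite hornerZ Q2_eval eqxx.
have E2 : \sum_(k < n | k != m)
     (\sum_(l < n | l != k) (Wcoef a x k * Wcoef a x l) *: Q2 k l).[x m 0] =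
   \sum_(k < n | k != m) Wcoef a x k * Wcoef a x m *
      \prod_(j < n | (j != m) && (j != k)) (x m 0 - x j 0).
  apply: eq_bigr => k nkm; rewrite horner_sum (bigD1 m) /=; last by rewrite eq_sym.
  rewrite big1 ?addr0.
    rewrite hornerZ Q2_eval eqxx orbT; congr (_ * _).
    by apply: eq_bigl => j; rewrite andbC.
  move=> l /andP [nlk nlm]; rewrite hornerZ Q2_eval.
  by rewrite eq_sym (negbTE nkm) eq_sym (negbTE nlm) mulr0.
rewrite E1 E2 -big_split mulr_sumr; apply: eq_bigr => l _ /=; ring.
Qed.

Lemma part3 : F2 a x WW WW = Fjac a x *m YY.
Proof.
have H : GG = - \sum_l YY l 0 *: Q1 l.
  apply: (roots_eq zz_inj); last first.
  - move=> m; rewrite /zz eval_sumQ1 GG_eval mxE.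
    have E : \sum_(l < n | l != m) Wcoef a x l *
        \prod_(j < n | (j != m) && (j != l)) (x m 0 - x j 0) =
      - ((\sum_(nu < n | nu != m) Wcoef a x nu / (x nu 0 - x m 0)) *
         \prod_(j < n | j != m) (x m 0 - x j 0)).
      rewrite mulr_suml -sumrN; apply: eq_bigr => nu nnm.
      rewrite [in RHS](bigD1 nu) //=.
      have hd : x nu 0 - x m 0 != 0 by rewrite subr_eq0 hx.
      rewrite (_ : x m 0 - x nu 0 = - (x nu 0 - x m 0)); last by rewrite opprB.
      field; exact: hd.
    rewrite E; ring.
  - exact: size_sumQ1.
  - rewrite /GG; apply: sz_sum => k _; apply: sz_sum => l _.
    exact: leq_trans (size_scale_leq _ _) (size_Q2 k l).
apply/matrixP => i j; rewrite (ord1 j) F2_E mulJ H //.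
Qed.

End T.
End S.

Theorem mainTheorem6 (R : rcfType) (n : nat) (a : 'I_n -> R) (x : 'cV[complex R]_n) :
  (2 <= n)%N ->
  (forall i j : 'I_n, i != j -> x i 0 != x j 0) ->
  let d := invmx (Fjac a x) *m Fval a x in
  [/\ Fjac a x \in unitmx,
      d = \col_l Wcoef a x l
    & forall j : 'I_n,
        (invmx (Fjac a x) *m F2 a x d d) j 0
        = 2 * Wcoef a x j *
          \sum_(nu < n | nu != j) Wcoef a x nu / (x nu 0 - x j 0)].
Proof.
move=> _ hx d.
have U := @unitJ R n a x hx.
have hd : d = \col_l Wcoef a x l by rewrite /d -(@part1 R n a x hx) mulKmx.
split => // j.
by rewrite hd -/(WW a x) (@part3 R n a x hx) mulKmx // mxE.
Qed.
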